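(* In the standing setting, if a robust $\boldsymbol b$-flow exists, then there exists an optimal robust $\boldsymbol b$-flow $\boldsymbol f=(f^1,f^2)$ with $c(\boldsymbol f)=\max\{c(f^1),c(f^2)\}=c(f^2)$.
   Context: A RobMCF instance $(G,u,c,\boldsymbol b)$ consists of a finite directed graph (parallel arcs allowed) $G=(V,A)$ whose arc set is partitioned as $A=A^{\mathrm{fix}}\cup A^{\mathrm{free}}$ into fixed and free arcs, capacities $u:A\to\mathbb Z_{\ge0}$, costs $c:A\to\mathbb Z_{\ge0}$, a finite nonempty set of scenarios $\Lambda$, and balances $b^\lambda:V\to\mathbb Z$ with $\sum_{v}b^\lambda(v)=0$. A $b^\lambda$-flow is a function $f^\lambda:A\to\mathbb Z_{\ge0}$ with $f^\lambda(a)\le u(a)$ for all $a$ and $\sum_{a=(v,w)\in A}f^\lambda(a)-\sum_{a=(w,v)\in A}f^\lambda(a)=b^\lambda(v)$ for all $v\in V$; its cost is $c(f^\lambda)=\sum_a c(a)f^\lambda(a)$. A robust $\boldsymbol b$-flow is a tuple $(f^\lambda)_{\lambda\in\Lambda}$ of $b^\lambda$-flows with $f^\lambda(a)=f^{\lambda'}(a)$ for all $a\in A^{\mathrm{fix}}$, $\lambda,\lambda'\in\Lambda$; its cost is $\max_\lambda c(f^\lambda)$; it is optimal if of minimum cost. Series-parallel (SP) digraphs are defined recursively: a single arc $(o,q)$ is an SP digraph with origin $o$ and target $q$; if $G_1$ (origin $o_1$, target $q_1$) and $G_2$ (origin $o_2$, target $q_2$) are SP digraphs, then their series composition (identify $q_1$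 with $o_2$; origin $o_1$, target $q_2$) and their parallel composition (identify $o_1$ with $o_2$ to form the origin and $q_1$ with $q_2$ to form the target) are SP digraphs. Standing setting: $G$ is an SP digraph with origin $o$ and target $q$, $\Lambda=\{1,2\}$, and there are integers $0\le d^1\le d^2$ with $b^\lambda(o)=d^\lambda$, $b^\lambda(q)=-d^\lambda$ and $b^\lambda(v)=0$ for all other $v$ (unique source $o$, unique sink $q$). *)

(* Defs.v *)
From mathcomp Require Import all_boot all_order all_algebra.
Set Implicit Arguments. Unset Strict Implicit. Unset Printing Implicit Defensive.
Import GRing.Theory Num.Theory.

(* A digraph is given by its arc list E : seq (nat * nat); arc i (i < size E)
   goes from tail (nth (0,0) E i).1 to head (nth (0,0) E i).2.  Vertices are
   natural numbers; the vertex set is the set of arc endpoints. *)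

Definition tl (E : seq (nat * nat)) (i : nat) : nat := (nth (0,0) E i).1.
Definition hd (E : seq (nat * nat)) (i : nat) : nat := (nth (0,0) E i).2.

Definition verts (E : seq (nat * nat)) : seq nat :=
  [seq p.1 | p <- E] ++ [seq p.2 | p <- E].

Inductive SP : seq (nat * nat) -> nat -> nat -> Prop :=
| SP_arc o q : o != q -> SP [:: (o, q)] o q
| SP_series E1 E2 o1 q1 q2 :
    SP E1 o1 q1 -> SP E2 q1 q2 ->
    (forall v, v \in verts E1 -> v \in verts E2 -> v = q1) ->
    SP (E1 ++ E2) o1 q2
| SP_parallel E1 E2 o q :
    SP E1 o q -> SP E2 o q ->
    (forall v, v \in verts E1 -> v \in verts E2 -> v = o \/ v = q) ->
    SP (E1 ++ E2) o q.

Definition stbal (o q d : nat) (v : nat) : int :=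
  if v == o then Posz d else if v == q then (- Posz d)%R else 0%R.

(* f : nat -> nat gives the flow value on arc i (only i < size E matters);
   nonnegativity and integrality are built into the type nat. *)
Definition is_bflow (E : seq (nat * nat)) (u : nat -> nat) (b : nat -> int)
    (f : nat -> nat) : Prop :=
  (forall i, i < size E -> f i <= u i) /\
  (forall v : nat,
     (Posz (\sum_(i < size E | tl E i == v) f i)
      - Posz (\sum_(i < size E | hd E i == v) f i))%R = b v).

Definition flow_cost (E : seq (nat * nat)) (c : nat -> nat) (f : nat -> nat) : nat :=
  \sum_(i < size E) c i * f i.

Definition robust_flow (E : seq (nat * nat)) (fixed : nat -> bool)
    (u : nat -> nat) (b1 b2 : nat -> int) (f1 f2 : nat -> nat) : Prop :=
  is_bflow E u b1 f1 /\ is_bflow E u b2 f2 /\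
  (forall i, i < size E -> fixed i -> f1 i = f2 i).

Definition robust_cost (E : seq (nat * nat)) (c : nat -> nat) (f1 f2 : nat -> nat) : nat :=
  maxn (flow_cost E c f1) (flow_cost E c f2).

Definition optimal_robust_flow (E : seq (nat * nat)) (fixed : nat -> bool)
    (u c : nat -> nat) (b1 b2 : nat -> int) (f1 f2 : nat -> nat) : Prop :=
  robust_flow E fixed u b1 b2 f1 f2 /\
  (forall g1 g2, robust_flow E fixed u b1 b2 g1 g2 ->
     robust_cost E c f1 f2 <= robust_cost E c g1 g2).

(* Main.v *)
Require Import Defs.
From mathcomp Require Import all_boot all_order all_algebra zify.

Definition outs E (f : nat -> nat) v := \sum_(0 <= i < size E | tl E i == v) f i.
Definition ins E (f : nat -> nat) v := \sum_(0 <= i < size E | hd E i == v) f i.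
Definition shift (n : nat) (f : nat -> nat) i := f (n + i).

Lemma sum_cat_gen (E1 E2 : seq (nat*nat)) (sel : seq (nat*nat) -> nat -> nat) f v :
  (forall E i, sel E i = (sel E i)) ->
  (forall i, sel (E1 ++ E2) i = (if i < size E1 then sel E1 i else sel E2 (i - size E1))) ->
  \sum_(0 <= i < size (E1 ++ E2) | sel (E1 ++ E2) i == v) f i =
  \sum_(0 <= i < size E1 | sel E1 i == v) f i +
  \sum_(0 <= i < size E2 | sel E2 i == v) shift (size E1) f i.
Proof.
move=> _ Hs.
rewrite size_cat (@big_cat_nat _ _ _ (size E1)) ?leq_addr //=.
congr (_ + _).
- rewrite big_mkcond [in RHS]big_mkcond /=; apply: eq_big_nat => i /andP[_ Hi].
  by rewrite Hs Hi.
- rewrite -{1}(add0n (size E1)) big_addn addKn big_mkcond [in RHS]big_mkcond /=.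
  apply: eq_big_nat => i _.
  by rewrite Hs ltnNge leq_addl /= addnK /shift addnC.
Qed.

Lemma outs_cat E1 E2 f v : outs (E1++E2) f v = outs E1 f v + outs E2 (shift (size E1) f) v.
Proof.
apply: sum_cat_gen => // i; rewrite /tl nth_cat; by case: ifP.
Qed.

Lemma ins_cat E1 E2 f v : ins (E1++E2) f v = ins E1 f v + ins E2 (shift (size E1) f) v.
Proof.
apply: sum_cat_gen => // i; rewrite /hd nth_cat; by case: ifP.
Qed.

Lemma mem_verts_cat E1 E2 v : (v \in verts (E1 ++ E2)) = (v \in verts E1) || (v \in verts E2).
Proof.
rewrite /verts !map_cat !mem_cat.
by case: (v \in [seq p.1 | p <- E1]); case: (v \in [seq p.1 | p <- E2]);
   case: (v \in [seq p.2 | p <- E1]); case: (v \in [seq p.2 | p <- E2]).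
Qed.

Lemma tl_verts E i : i < size E -> tl E i \in verts E.
Proof. move=> Hi; rewrite /verts mem_cat /tl; apply/orP; left; apply: map_f; exact: mem_nth. Qed.
Lemma hd_verts E i : i < size E -> hd E i \in verts E.
Proof. move=> Hi; rewrite /verts mem_cat /hd; apply/orP; right; apply: map_f; exact: mem_nth. Qed.

Lemma outs_nv E f v : v \notin verts E -> outs E f v = 0.
Proof.
move=> Hv; rewrite /outs big_mkord big1 // => i /eqP Ht; move: Hv; by rewrite -Ht tl_verts.
Qed.
Lemma ins_nv E f v : v \notin verts E -> ins E f v = 0.
Proof.
move=> Hv; rewrite /ins big_mkord big1 // => i /eqP Ht; move: Hv; by rewrite -Ht hd_verts.
Qed.
Lemma SP_struct E o q : SP E o q ->
  [/\ o != q, o \in verts E, q \in verts E &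
      forall i, i < size E -> hd E i != o /\ tl E i != q].
Proof.
elim=> {E o q}.
- move=> o q Hoq; split => //; first by rewrite /verts /= !inE eqxx.
  + by rewrite /verts /= !inE eqxx !orbT.
  + case=> // _; rewrite /hd /tl /=; split => //; by rewrite eq_sym.
- move=> E1 E2 o1 q1 q2 _ [n1 o1in q1in A1] _ [n2 q1in' q2in A2] H.
  split.
  + apply/eqP => e; subst q2; have := H o1 o1in q2in => e; by rewrite e eqxx in n1.
  + by rewrite mem_verts_cat o1in.
  + by rewrite mem_verts_cat q2in orbT.
  + move=> i; rewrite size_cat /hd /tl nth_cat; case: ifP => Hi Hs.
    * have [a b] := A1 i Hi; split => //; apply/eqP => e.
      have := H q2 _ q2in; rewrite -{1}e => /(_ (tl_verts _ _ Hi)) e2.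
      by move: b; rewrite /tl e e2 eqxx.
    * have Hj : i - size E1 < size E2 by move: Hi Hs => /negbT; rewrite -leqNgt; lia.
      have [a b] := A2 _ Hj; split => //; apply/eqP => e.
      have := H o1 o1in; rewrite -{1}e => /(_ (hd_verts _ _ Hj)) e2.
      by move: a; rewrite /hd e e2 eqxx.
- move=> E1 E2 o q _ [n1 o1in q1in A1] _ [n2 q1in' q2in A2] H.
  split => //.
  + by rewrite mem_verts_cat o1in.
  + by rewrite mem_verts_cat q1in.
  + move=> i; rewrite size_cat /hd /tl nth_cat; case: ifP => Hi Hs.
    * exact: A1.
    * apply: A2; move: Hi Hs => /negbT; rewrite -leqNgt; lia.
Qed.

Arguments SP_struct {E o q}.
Definition cons (E : seq (nat*nat)) f (o q : nat) := forall v, v != o -> v != q -> outs E f v = ins E f v.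
Definition glue n (g1 g2 : nat -> nat) i := if i < n then g1 i else g2 (i - n).

Lemma outs_ext E f g v : (forall i, i < size E -> f i = g i) -> outs E f v = outs E g v.
Proof. move=> H; rewrite /outs !big_mkord; apply: eq_bigr => i _; exact: H. Qed.
Lemma ins_ext E f g v : (forall i, i < size E -> f i = g i) -> ins E f v = ins E g v.
Proof. move=> H; rewrite /ins !big_mkord; apply: eq_bigr => i _; exact: H. Qed.

Lemma outs_glue E1 E2 g1 g2 v :
  outs (E1++E2) (glue (size E1) g1 g2) v = outs E1 g1 v + outs E2 g2 v.
Proof.
rewrite outs_cat; congr (_+_); apply: outs_ext => i Hi; rewrite /glue /shift ?Hi //.
by rewrite ltnNge leq_addr /= addKn.
Qed.
Lemma ins_glue E1 E2 g1 g2 v :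
  ins (E1++E2) (glue (size E1) g1 g2) v = ins E1 g1 v + ins E2 g2 v.
Proof.
rewrite ins_cat; congr (_+_); apply: ins_ext => i Hi; rewrite /glue /shift ?Hi //.
by rewrite ltnNge leq_addr /= addKn.
Qed.

Lemma ins_o E o q f : SP E o q -> ins E f o = 0.
Proof.
move=> H; rewrite /ins big_mkord big1 // => i /eqP Hi.
have [_ _ _ A] := SP_struct H; have [a _] := A i (ltn_ord i); by rewrite Hi eqxx in a.
Qed.
Arguments ins_o {E o q} f _.

Lemma outs_q E o q f : SP E o q -> outs E f q = 0.
Proof.
move=> H; rewrite /outs big_mkord big1 // => i /eqP Hi.
have [_ _ _ A] := SP_struct H; have [_ a] := A i (ltn_ord i); by rewrite Hi eqxx in a.
Qed.
Arguments outs_q {E o q} f _.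


Lemma cons_restr1 E1 E2 f o q o' q' : cons (E1++E2) f o' q' ->
  (forall v, v \in verts E1 -> v != o -> v != q -> [/\ v \notin verts E2, v != o' & v != q']) ->
  cons E1 f o q.
Proof.
move=> Hc Hv v vo vq; case: (boolP (v \in verts E1)) => vin.
- have [n2 vo' vq'] := Hv v vin vo vq; have := Hc v vo' vq'.
  by rewrite outs_cat ins_cat (outs_nv _ _ _ n2) (ins_nv _ _ _ n2) !addn0.
- by rewrite outs_nv // ins_nv.
Qed.
Arguments cons_restr1 {E1 E2 f o q o' q'}.

Lemma cons_restr2 E1 E2 f o q o' q' : cons (E1++E2) f o' q' ->
  (forall v, v \in verts E2 -> v != o -> v != q -> [/\ v \notin verts E1, v != o' & v != q']) ->
  cons E2 (shift (size E1) f) o q.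
Proof.
move=> Hc Hv v vo vq; case: (boolP (v \in verts E2)) => vin.
- have [n2 vo' vq'] := Hv v vin vo vq; have := Hc v vo' vq'.
  by rewrite outs_cat ins_cat (outs_nv _ _ _ n2) (ins_nv _ _ _ n2).
- by rewrite outs_nv // ins_nv.
Qed.
Arguments cons_restr2 {E1 E2 f o q o' q'}.


Lemma series_side E1 E2 o1 q1 q2 : SP E1 o1 q1 -> SP E2 q1 q2 ->
    (forall v, v \in verts E1 -> v \in verts E2 -> v = q1) ->
  (forall v, v \in verts E1 -> v != o1 -> v != q1 -> [/\ v \notin verts E2, v != o1 & v != q2]) /\
  (forall v, v \in verts E2 -> v != q1 -> v != q2 -> [/\ v \notin verts E1, v != o1 & v != q2]) /\
  o1 \notin verts E2 /\ q2 \notin verts E1.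
Proof.
move=> S1 S2 H; have [n1 o1in q1in _] := SP_struct S1; have [n2 q1in' q2in _] := SP_struct S2.
have nv1 : forall v, v \in verts E1 -> v != q1 -> v \notin verts E2.
  by move=> v vin vq; apply/negP => vin2; move: vq; rewrite (H v vin vin2) eqxx.
have nv2 : forall v, v \in verts E2 -> v != q1 -> v \notin verts E1.
  by move=> v vin vq; apply/negP => vin2; move: vq; rewrite (H v vin2 vin) eqxx.
split; [|split; [|split]].
- move=> v vin vo vq; have vn := nv1 v vin vq; split => //.
  by apply/eqP => e; move: vn; rewrite e q2in.
- move=> v vin vo vq; have vn := nv2 v vin vo; split => //.
  by apply/eqP => e; move: vn; rewrite e o1in.
- exact: nv1.
- apply: nv2 => //; by rewrite eq_sym.
Qed.
Arguments series_side {E1 E2 o1 q1 q2}.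


Lemma par_side E1 E2 o q :
    (forall v, v \in verts E1 -> v \in verts E2 -> v = o \/ v = q) ->
  (forall v, v \in verts E1 -> v != o -> v != q -> [/\ v \notin verts E2, v != o & v != q]) /\
  (forall v, v \in verts E2 -> v != o -> v != q -> [/\ v \notin verts E1, v != o & v != q]).
Proof.
move=> H; split=> v vin vo vq; split => //; apply/negP => vin2.
- by case: (H v vin vin2) => e; [move: vo|move: vq]; rewrite e eqxx.
- by case: (H v vin2 vin) => e; [move: vo|move: vq]; rewrite e eqxx.
Qed.
Arguments par_side {E1 E2 o q}.


Lemma SP_val E o q : SP E o q -> forall f, cons E f o q -> outs E f o = ins E f q.
Proof.
elim=> {E o q}.
- move=> o q Hoq f _.
  rewrite /outs big_mkcond /= big_nat1 /ins big_mkcond /= big_nat1 /tl /hd /=.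
  by rewrite !eqxx.
- move=> E1 E2 o1 q1 q2 S1 IH1 S2 IH2 H f Hc.
  have [s1 [s2 [no1 nq2]]] := series_side S1 S2 H.
  have [n1 _ _ _] := SP_struct S1; have [n2 _ _ _] := SP_struct S2.
  have c1 := cons_restr1 Hc s1; have c2 := cons_restr2 Hc s2.
  rewrite outs_cat ins_cat (outs_nv _ _ _ no1) (ins_nv _ _ _ nq2) addn0 add0n.
  rewrite IH1 // -IH2 //.
  have := Hc q1; rewrite eq_sym n1 n2 => /(_ isT isT).
  by rewrite outs_cat ins_cat (outs_q _ S1) (ins_o _ S2) add0n addn0 => <-.
- move=> E1 E2 o q S1 IH1 S2 IH2 H f Hc.
  have [s1 s2] := par_side H.
  have c1 := cons_restr1 Hc s1; have c2 := cons_restr2 Hc s2.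
  by rewrite outs_cat ins_cat IH1 // IH2.
Qed.

Arguments SP_val {E o q}.
Definition fv (E : seq (nat*nat)) f (o q x : nat) := cons E f o q /\ outs E f o = x.

Lemma outs_arc o q f v : outs [:: (o,q)] f v = if o == v then f 0 else 0.
Proof. by rewrite /outs big_mkcond /= big_nat1 /tl /=. Qed.
Lemma ins_arc o q f v : ins [:: (o,q)] f v = if q == v then f 0 else 0.
Proof. by rewrite /ins big_mkcond /= big_nat1 /hd /=. Qed.

Lemma series_restr E1 E2 o1 q1 q2 f x : SP E1 o1 q1 -> SP E2 q1 q2 ->
    (forall v, v \in verts E1 -> v \in verts E2 -> v = q1) ->
  fv (E1 ++ E2) f o1 q2 x -> fv E1 f o1 q1 x /\ fv E2 (shift (size E1) f) q1 q2 x.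
Proof.
move=> S1 S2 H [Hc Hx].
have [s1 [s2 [no1 nq2]]] := series_side S1 S2 H.
have [n1 _ _ _] := SP_struct S1; have [n2 _ _ _] := SP_struct S2.
have c1 := cons_restr1 Hc s1; have c2 := cons_restr2 Hc s2.
have e1 : outs E1 f o1 = x by rewrite -Hx outs_cat (outs_nv _ _ _ no1) addn0.
split; split => //.
have := Hc q1; rewrite eq_sym n1 n2 => /(_ isT isT).
rewrite outs_cat ins_cat (outs_q _ S1) (ins_o _ S2) add0n addn0 => ->.
by rewrite -(SP_val S1).
Qed.
Arguments series_restr {E1 E2 o1 q1 q2 f x}.


Lemma series_glue E1 E2 o1 q1 q2 g1 g2 t : SP E1 o1 q1 -> SP E2 q1 q2 ->
    (forall v, v \in verts E1 -> v \in verts E2 -> v = q1) ->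
  fv E1 g1 o1 q1 t -> fv E2 g2 q1 q2 t -> fv (E1 ++ E2) (glue (size E1) g1 g2) o1 q2 t.
Proof.
move=> S1 S2 H [c1 e1] [c2 e2].
have [s1 [s2 [no1 nq2]]] := series_side S1 S2 H.
split.
- move=> v vo vq; rewrite outs_glue ins_glue.
  case: (eqVneq v q1) => [->|vq1].
  + by rewrite (outs_q _ S1) (ins_o _ S2) e2 -(SP_val S1 g1 c1) e1 add0n addn0.
  + by rewrite c1 // c2.
- by rewrite outs_glue e1 (outs_nv _ _ _ no1) addn0.
Qed.
Arguments series_glue {E1 E2 o1 q1 q2 g1 g2 t}.


Lemma par_restr E1 E2 o q f x : SP E1 o q -> SP E2 o q ->
    (forall v, v \in verts E1 -> v \in verts E2 -> v = o \/ v = q) ->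
  fv (E1 ++ E2) f o q x ->
  exists a b, a + b = x /\ fv E1 f o q a /\ fv E2 (shift (size E1) f) o q b.
Proof.
move=> S1 S2 H [Hc Hx].
have [s1 s2] := par_side H.
have c1 := cons_restr1 Hc s1; have c2 := cons_restr2 Hc s2.
exists (outs E1 f o), (outs E2 (shift (size E1) f) o).
by rewrite -outs_cat.
Qed.
Arguments par_restr {E1 E2 o q f x}.


Lemma par_glue E1 E2 o q g1 g2 a b : SP E1 o q -> SP E2 o q ->
    (forall v, v \in verts E1 -> v \in verts E2 -> v = o \/ v = q) ->
  fv E1 g1 o q a -> fv E2 g2 o q b -> fv (E1 ++ E2) (glue (size E1) g1 g2) o q (a + b).
Proof.
move=> S1 S2 H [c1 e1] [c2 e2]; split.
- by move=> v vo vq; rewrite outs_glue ins_glue c1 // c2.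
- by rewrite outs_glue e1 e2.
Qed.
Arguments par_glue {E1 E2 o q g1 g2 a b}.


Definition bnds (E : seq (nat*nat)) (f1 f2 g : nat -> nat) := forall i, i < size E -> minn (f1 i) (f2 i) <= g i <= f2 i.

Lemma glue_bnds E1 E2 f1 f2 g1 g2 :
  bnds E1 f1 f2 g1 -> bnds E2 (shift (size E1) f1) (shift (size E1) f2) g2 ->
  bnds (E1 ++ E2) f1 f2 (glue (size E1) g1 g2).
Proof.
move=> B1 B2 i; rewrite size_cat /glue; case: ifP => Hi Hs; first exact: B1.
have Hj : i - size E1 < size E2 by move: Hi Hs => /negbT; rewrite -leqNgt; lia.
have := B2 _ Hj; rewrite /shift subnKC //; move: Hi => /negbT; rewrite -leqNgt //.
Qed.
Arguments glue_bnds {E1 E2 f1 f2 g1 g2}.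


Lemma arith a1 b1 a2 b2 t : a1 + b1 <= t <= a2 + b2 ->
  exists ta tb, ta + tb = t /\ ((a1 <= ta <= a2) \/ ta = a2) /\ ((b1 <= tb <= b2) \/ tb = b2).
Proof.
move=> Ht.
case: (ltnP a2 a1) => h1.
  exists a2, (t - a2); split; first lia. split; [by right| left; lia].
case: (ltnP b2 b1) => h2.
  exists (t - b2), b2; split; first lia. split; [left; lia| by right].
exists (minn a2 (t - b1)), (t - minn a2 (t - b1)); split; first lia.
split; left; lia.
Qed.

Lemma claim E o q : SP E o q -> forall f1 f2 x y t, fv E f1 o q x -> fv E f2 o q y ->
  x <= t <= y -> exists g, fv E g o q t /\ bnds E f1 f2 g.
Proof.
elim=> {E o q}.
- move=> o q Hoq f1 f2 x y t [_ e1] [_ e2] Ht.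
  move: e1 e2; rewrite !outs_arc eqxx => e1 e2.
  exists (fun _ => t); split.
  + split; last by rewrite outs_arc eqxx.
    move=> v vo vq; by rewrite outs_arc ins_arc eq_sym (negbTE vo) eq_sym (negbTE vq).
  + case=> // _; rewrite e1 e2; lia.
- move=> E1 E2 o1 q1 q2 S1 IH1 S2 IH2 H f1 f2 x y t F1 F2 Ht.
  have [F11 F12] := series_restr S1 S2 H F1.
  have [F21 F22] := series_restr S1 S2 H F2.
  have [g1 [G1 B1]] := IH1 _ _ _ _ _ F11 F21 Ht.
  have [g2 [G2 B2]] := IH2 _ _ _ _ _ F12 F22 Ht.
  exists (glue (size E1) g1 g2); split; first exact: (series_glue S1 S2 H G1 G2).
  exact: glue_bnds.
- move=> E1 E2 o q S1 IH1 S2 IH2 H f1 f2 x y t F1 F2 Ht.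
  have [a1 [b1 [ex [F11 F12]]]] := par_restr S1 S2 H F1.
  have [a2 [b2 [ey [F21 F22]]]] := par_restr S1 S2 H F2.
  have [ta [tb [et [Ha Hb]]]] := arith a1 b1 a2 b2 t ltac:(rewrite ex ey //).
  have part : forall E' o' q' (IH : forall f1 f2 x y t, fv E' f1 o' q' x -> fv E' f2 o' q' y ->
      x <= t <= y -> exists g, fv E' g o' q' t /\ bnds E' f1 f2 g) h1 h2 c1 c2 tc,
      fv E' h1 o' q' c1 -> fv E' h2 o' q' c2 -> (c1 <= tc <= c2) \/ tc = c2 ->
      exists g, fv E' g o' q' tc /\ bnds E' h1 h2 g.
    move=> E' o' q' IH h1 h2 c1 c2 tc Q1 Q2 [Hc|->]; first exact: IH Q1 Q2 Hc.
    exists h2; split => // i _; by rewrite geq_minr leqnn.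
  have [g1 [G1 B1]] := part _ _ _ IH1 _ _ _ _ _ F11 F21 Ha.
  have [g2 [G2 B2]] := part _ _ _ IH2 _ _ _ _ _ F12 F22 Hb.
  exists (glue (size E1) g1 g2); split; last exact: glue_bnds.
  rewrite -et; exact: par_glue.
Qed.
Lemma bflow_fv E o q u d f : SP E o q -> is_bflow E u (stbal o q d) f -> fv E f o q d.
Proof.
move=> S [_ Hb]; have [n _ _ _] := SP_struct S.
split.
- move=> v vo vq; have := Hb v; rewrite /stbal (negbTE vo) (negbTE vq).
  rewrite /outs /ins !big_mkord; lia.
- have := Hb o; rewrite /stbal eqxx.
  have := ins_o f S; rewrite /outs /ins !big_mkord; lia.
Qed.

Lemma fv_bflow E o q u d g : SP E o q -> fv E g o q d -> (forall i, i < size E -> g i <= u i) ->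
  is_bflow E u (stbal o q d) g.
Proof.
move=> S [c e] Hu; have [n _ _ _] := SP_struct S; split => // v.
have h1 := ins_o g S; have h2 := outs_q g S; have h3 := SP_val S g c.
rewrite /stbal; case: (eqVneq v o) => [->|vo].
  move: e h1; rewrite /outs /ins !big_mkord; lia.
case: (eqVneq v q) => [->|vq].
  move: e h2 h3; rewrite /outs /ins !big_mkord; lia.
move: (c v vo vq); rewrite /outs /ins !big_mkord; lia.
Qed.

From Stdlib Require Import Classical.

Lemma opt_exists E fixed u c b1 b2 :
  (exists g1 g2, robust_flow E fixed u b1 b2 g1 g2) ->
  exists f1 f2, optimal_robust_flow E fixed u c b1 b2 f1 f2.
Proof.
move=> [g1 [g2 R]].
suff: forall n g1 g2, robust_flow E fixed u b1 b2 g1 g2 -> robust_cost E c g1 g2 < n ->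
  exists f1 f2, optimal_robust_flow E fixed u c b1 b2 f1 f2 by move/(_ _ g1 g2 R (ltnSn _)).
elim=> // n IH h1 h2 Rh Hlt.
case: (classic (exists k1 k2, robust_flow E fixed u b1 b2 k1 k2 /\
                 robust_cost E c k1 k2 < robust_cost E c h1 h2)).
- move=> [k1 [k2 [Rk Hk]]]; apply: (IH k1 k2 Rk); apply: leq_trans Hk _; by rewrite -ltnS.
- move=> Hn; exists h1, h2; split => // k1 k2 Rk.
  rewrite leqNgt; apply/negP => Hk; apply: Hn; by exists k1, k2.
Qed.

Theorem mainTheorem17 (E : seq (nat * nat)) (o q : nat) (fixed : nat -> bool)
    (u c : nat -> nat) (d1 d2 : nat) :
  SP E o q -> d1 <= d2 ->
  (exists g1 g2, robust_flow E fixed u (stbal o q d1) (stbal o q d2) g1 g2) ->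
  exists f1 f2,
    optimal_robust_flow E fixed u c (stbal o q d1) (stbal o q d2) f1 f2 /\
    robust_cost E c f1 f2 = flow_cost E c f2.
Proof.
move=> S Hd Hex.
have [f1 [f2 [[R1 [R2 Rfix]] Opt]]] := opt_exists E fixed u c _ _ Hex.
have F1 := bflow_fv _ _ _ _ _ _ S R1; have F2 := bflow_fv _ _ _ _ _ _ S R2.
have [h [Gh Bh]] := claim _ _ _ S _ _ _ _ d1 F1 F2 ltac:(by rewrite leqnn Hd).
have hu : forall i, i < size E -> h i <= u i.
  move=> i Hi; have /andP[_ b] := Bh i Hi; apply: leq_trans b _; by case: R2 => ->.
have Rh : robust_flow E fixed u (stbal o q d1) (stbal o q d2) h f2.
  split; first exact: fv_bflow _ _ _ _ _ _ S Gh hu.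
  split => // i Hi Hf; have := Bh i Hi; rewrite (Rfix i Hi Hf) minnn => b.
  by apply/eqP; rewrite eqn_leq andbC.
have Hc : flow_cost E c h <= flow_cost E c f2.
  rewrite /flow_cost; apply: leq_sum => i _; rewrite leq_mul2l.
  by have /andP[_ ->] := Bh i (ltn_ord i); rewrite orbT.
have Hrc : robust_cost E c h f2 = flow_cost E c f2 by rewrite /robust_cost; apply/maxn_idPr.
exists h, f2; split => //; split => // g1 g2 Rg.
rewrite Hrc; apply: leq_trans (Opt g1 g2 Rg); exact: leq_maxr.
Qed.
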